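(* Let $n\ge1$, let $a=(a_m)_{m\ge0}$, $b=(b_m)_{m\ge0}$ be complex sequences with $b_0=0$ and $b_m\ne0$ for $m\ge1$, and let $\omega(u)=\sum_{i=1}^n\tilde T_{ii}(u)$ in $OY(\mathfrak{gl}_n,a,b)[[u^{-1}]]$. Then $[\omega(u),\omega(v)]=0$, i.e. all coefficients of $\omega(u)$ pairwise commute.
   Context: $OY(\mathfrak{gl}_n,a,b)$ is the unital associative $\mathbb C$-algebra with generators $\tilde t^{(r)}_{ij}$ ($1\le i,j\le n$, $r\ge1$) and defining relations $[\tilde t^{(r+1)}_{ij}+a_r\tilde t^{(r)}_{ij}+b_r\tilde t^{(r-1)}_{ij},\tilde t^{(s)}_{kl}]-[\tilde t^{(r)}_{ij},\tilde t^{(s+1)}_{kl}+a_s\tilde t^{(s)}_{kl}+b_s\tilde t^{(s-1)}_{kl}]=\tilde t^{(r)}_{kj}\tilde t^{(s)}_{il}-\tilde t^{(s)}_{kj}\tilde t^{(r)}_{il}$ for all $r,s\ge0$ and all $i,j,k,l$, with $\tilde t^{(0)}_{ij}=\delta_{ij}$, $\tilde t^{(-1)}_{ij}=0$; $\tilde T_{ij}(u)=\delta_{ij}+\sum_{r\ge1}\tilde t^{(r)}_{ij}u^{-r}$. *)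

(* Defs.v *)
From HB Require Import structures.
From mathcomp Require Import all_boot all_order all_algebra.
From mathcomp Require Import complex.
From mathcomp Require Import Rstruct.
Set Implicit Arguments. Unset Strict Implicit. Unset Printing Implicit Defensive.
Import Order.TTheory GRing.Theory Num.Theory.
Local Open Scope ring_scope.

Definition CC : Type := complex Rdefinitions.R.
Definition CC_fieldType : fieldType := CC.

Definition comm_r (A : pzRingType) (x y : A) : A := x * y - y * x.

(* Given the generators g r i j (meaningful only for r >= 1), the extended
   family  t^{(0)}_{ij} = delta_{ij},  t^{(r)}_{ij} = g r i j  for r >= 1. *)
Definition Tt (A : pzRingType) (n : nat) (g : nat -> 'I_n -> 'I_n -> A)
  (r : nat) (i j : 'I_n) : A :=
  if r == 0%N then (i == j)%:R else g r i j.

Definition Ttm1 (A : pzRingType) (n : nat) (g : nat -> 'I_n -> 'I_n -> A)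
  (r : nat) (i j : 'I_n) : A :=
  if r is r'.+1 then Tt g r' i j else 0.

Definition OY_relations (A : algType CC_fieldType) (n : nat)
  (a b : nat -> CC_fieldType) (g : nat -> 'I_n -> 'I_n -> A) : Prop :=
  forall (r s : nat) (i j k l : 'I_n),
    comm_r (Tt g r.+1 i j + a r *: Tt g r i j + b r *: Ttm1 g r i j) (Tt g s k l)
    - comm_r (Tt g r i j) (Tt g s.+1 k l + a s *: Tt g s k l + b s *: Ttm1 g s k l)
    = Tt g r k j * Tt g s i l - Tt g s k j * Tt g r i l.

(* Coefficient of u^{-r} in omega(u) = sum_i T_ii(u). *)
Definition omega_coef (A : pzRingType) (n : nat) (g : nat -> 'I_n -> 'I_n -> A)
  (r : nat) : A := \sum_(i < n) Tt g r i i.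

(* Main.v *)
Require Import Defs.
From HB Require Import structures.
From mathcomp Require Import all_boot all_order all_algebra.
From mathcomp Require Import complex Rstruct zify ring.
Import GRing.Theory.
Local Open Scope ring_scope.

Section Aux.
Variables (A : algType CC_fieldType) (a b : nat -> CC_fieldType).

Definition Lop (F : nat -> nat -> A) (r s : nat) : A :=
  (F r.+1 s + a r *: F r s + b r *: (if r is r'.+1 then F r' s else 0))
  - (F r s.+1 + a s *: F r s + b s *: (if s is s'.+1 then F r s' else 0)).

Lemma Lop_low (F : nat -> nat -> A) M :
  (forall p q, (p + q <= M)%N -> F p q = 0) ->
  forall p q, (p + q < M)%N -> Lop F p q = 0.
Proof.
move=> H p q lt; rewrite /Lop !H; try lia.
case: p lt => [|p] lt; case: q lt => [|q] lt; rewrite ?H; try lia;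
  by rewrite !scaler0 !addr0 subrr.
Qed.

Lemma Lop_top (F : nat -> nat -> A) M :
  (forall p q, (p + q <= M)%N -> F p q = 0) ->
  forall p q, (p + q = M)%N -> Lop F p q = F p.+1 q - F p q.+1.
Proof.
move=> H p q e; rewrite /Lop (H p q); last lia.
case: p e => [|p] e; case: q e => [|q] e; rewrite ?(H p) ?(H _ q); try lia;
  by rewrite !scaler0 !addr0.
Qed.

Lemma Lop_ext (F G : nat -> nat -> A) :
  (forall r s, F r s = G r s) -> forall r s, Lop F r s = Lop G r s.
Proof. by move=> e r s; rewrite /Lop !e; case: r; case: s => *; rewrite ?e. Qed.

Lemma nat_char (m : nat) : (m.+1%:R : CC_fieldType) != 0.
Proof. change ((m.+1%:R : CC) != 0). by rewrite Num.Theory.pnatr_eq0. Qed.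

Lemma LL_zero (F : nat -> nat -> A) :
  (forall s, F 0%N s = 0) -> (forall r, F r 0%N = 0) ->
  (forall r s, Lop (Lop F) r s = F r s) -> forall r s, F r s = 0.
Proof.
move=> H0 H0' HL.
suff: forall N p q, (p + q = N)%N -> F p q = 0.
  by move=> H r s; apply: (H (r + s)%N).
elim/ltn_ind=> N IH0 p q e.
case: p e => [|p] e; first by rewrite H0.
case: q e => [|q] e; first by rewrite H0'.
have {}IH : forall p q, (p + q <= (N - 2).+1)%N -> F p q = 0.
  by move=> p' q' h; apply: (IH0 (p' + q')%N) => //; lia.
set M := (N - 2)%N in IH.
have eN : N = M.+2 by rewrite /M; lia.
rewrite eN in e.
have HLF : forall p q, (p + q <= M)%N -> Lop F p q = 0.
  by move=> p' q' h; apply: (@Lop_low F M.+1 IH); lia.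
have rec : forall j, (j <= M)%N ->
    F j.+2 (M - j)%N = F j.+1 (M - j).+1 *+ 2 - F j (M - j).+2.
  move=> j hj.
  have := HL j (M - j)%N.
  rewrite (@Lop_top (Lop F) M HLF); last lia.
  rewrite (@Lop_top F M.+1 IH); last lia.
  rewrite (@Lop_top F M.+1 IH); last lia.
  rewrite (IH j (M - j)%N); last lia.
  move/eqP; rewrite subr_eq0 subr_eq => /eqP ->.
  by rewrite mulr2n addrC addrA.
pose x j := F j (M.+2 - j)%N.
have step : forall j, (j < M.+2)%N -> x j = x 1%N *+ j /\ x j.+1 = x 1%N *+ j.+1.
  elim=> [|j IHj] hj.
    by rewrite /x subn0 H0 mulr0n mulr1n.
  have [h1 h2] := IHj (ltnW hj).
  split => //.
  have r := rec j (ltac:(lia)).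
  rewrite /x.
  have -> : (M.+2 - j.+2 = M - j)%N by lia.
  rewrite r.
  have -> : ((M - j).+1 = M.+2 - j.+1)%N by lia.
  have -> : ((M.+2 - j.+1).+1 = M.+2 - j)%N by lia.
  rewrite /x in h1 h2; rewrite h1 h2.
  by rewrite -mulrnA -mulrnBr; [congr (_ *+ _); lia | lia].
have x1 : x 1%N = 0.
  have [_ h] := step M.+1 (ltnSn _).
  move: h; rewrite /x subnn H0' -scaler_nat => /esym/eqP.
  rewrite scaler_eq0 (negbTE (nat_char _)) /= => /eqP.
  by rewrite /x.
have [h _] := step p.+1 (ltac:(lia)).
move: h; rewrite x1 mul0rn /x.
by have -> : (M.+2 - p.+1 = q.+1)%N by lia.
Qed.
End Aux.

Section Comm.
Variable (A : algType CC_fieldType).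
Implicit Types x y z : A.
Lemma commDl x y z : comm_r (x + y) z = comm_r x z + comm_r y z.
Proof. by rewrite /comm_r mulrDl mulrDr opprD addrACA. Qed.
Lemma commDr x y z : comm_r z (x + y) = comm_r z x + comm_r z y.
Proof. by rewrite /comm_r mulrDl mulrDr opprD addrACA. Qed.
Lemma commNl y z : comm_r (- y) z = - comm_r y z.
Proof. by rewrite /comm_r mulNr mulrN opprK opprB addrC. Qed.
Lemma commBl x y z : comm_r (x - y) z = comm_r x z - comm_r y z.
Proof. by rewrite commDl commNl. Qed.
Lemma commZl (c : CC_fieldType) x z : comm_r (c *: x) z = c *: comm_r x z.
Proof. by rewrite /comm_r -scalerAl -scalerAr scalerBr. Qed.
Lemma commZr (c : CC_fieldType) x z : comm_r z (c *: x) = c *: comm_r z x.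
Proof. by rewrite /comm_r -scalerAl -scalerAr scalerBr. Qed.
Lemma comm0l z : comm_r 0 z = 0.
Proof. by rewrite /comm_r mul0r mulr0 subrr. Qed.
Lemma comm0r z : comm_r z 0 = 0.
Proof. by rewrite /comm_r mul0r mulr0 subrr. Qed.
Lemma sum2B n (f h : 'I_n -> 'I_n -> A) :
  \sum_i \sum_k (f i k - h i k) = \sum_i \sum_k f i k - \sum_i \sum_k h i k.
Proof. rewrite -sumrB; apply: eq_bigr => i _; by rewrite sumrB. Qed.
Lemma sum2D n (f h : 'I_n -> 'I_n -> A) :
  \sum_i \sum_k (f i k + h i k) = \sum_i \sum_k f i k + \sum_i \sum_k h i k.
Proof. rewrite -big_split; apply: eq_bigr => i _; by rewrite big_split. Qed.
Lemma sum2Z n (c : CC_fieldType) (f : 'I_n -> 'I_n -> A) :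
  \sum_i \sum_k (c *: f i k) = c *: \sum_i \sum_k f i k.
Proof. rewrite scaler_sumr; apply: eq_bigr => i _; by rewrite scaler_sumr. Qed.
Lemma sum2_0 n : \sum_(i < n) \sum_(k < n) (0 : A) = 0.
Proof. by rewrite big1 // => i _; rewrite big1. Qed.
Lemma sum2M n (x y : 'I_n -> A) :
  \sum_i \sum_k (x i * y k) = (\sum_i x i) * (\sum_k y k).
Proof. rewrite mulr_suml; apply: eq_bigr => i _; by rewrite mulr_sumr. Qed.
Lemma comm_sum2 n (x y : 'I_n -> A) :
  comm_r (\sum_i x i) (\sum_k y k) = \sum_i \sum_k comm_r (x i) (y k).
Proof.
rewrite /comm_r sum2B sum2M; congr (_ - _).
by rewrite exchange_big /= sum2M.
Qed.
Lemma sum2_lin n (F1 F2 F3 G1 G2 G3 : 'I_n -> 'I_n -> A) al be ga de :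
  \sum_i \sum_k ((F1 i k + al *: F2 i k + be *: F3 i k)
                 - (G1 i k + ga *: G2 i k + de *: G3 i k))
  = (\sum_i \sum_k F1 i k + al *: \sum_i \sum_k F2 i k + be *: \sum_i \sum_k F3 i k)
    - (\sum_i \sum_k G1 i k + ga *: \sum_i \sum_k G2 i k + de *: \sum_i \sum_k G3 i k).
Proof. by rewrite sum2B !sum2D !sum2Z. Qed.
Lemma sum2c0l n (f : 'I_n -> 'I_n -> A) : \sum_i \sum_k comm_r 0 (f i k) = 0.
Proof. by rewrite big1 // => i _; rewrite big1 // => k _; rewrite comm0l. Qed.
Lemma sum2c0r n (f : 'I_n -> 'I_n -> A) : \sum_i \sum_k comm_r (f i k) 0 = 0.
Proof. by rewrite big1 // => i _; rewrite big1 // => k _; rewrite comm0r. Qed.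
End Comm.

Opaque comm_r.
Section Main.
Variables (n : nat) (a b : nat -> CC_fieldType) (A : algType CC_fieldType)
  (g : nat -> 'I_n -> 'I_n -> A).
Hypothesis H : OY_relations a b g.

Let w r := omega_coef g r.
Let c r s := comm_r (w r) (w s).
Let d r s := \sum_(i < n) \sum_(k < n) comm_r (Tt g r k i) (Tt g s i k).

Lemma sumP r : \sum_(i < n) (Tt g r.+1 i i + a r *: Tt g r i i + b r *: Ttm1 g r i i)
  = w r.+1 + a r *: w r + b r *: (if r is r'.+1 then w r' else 0).
Proof.
rewrite !big_split /= -!scaler_sumr; congr (_ + _ + b r *: _).
case: r => [|r] /=; first by rewrite big1.
by [].
Qed.

Lemma lem1 r s : @Lop A a b c r s = d r s.
Proof.
have -> : d r s = \sum_(i < n) \sum_(k < n)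
    (Tt g r k i * Tt g s i k - Tt g s k i * Tt g r i k).
  rewrite /d sum2B; rewrite /comm_r sum2B; congr (_ - _).
  by rewrite exchange_big.
under eq_bigr => i _ do under eq_bigr => k _ do rewrite -H.
rewrite sum2B -!comm_sum2 sumP sumP /c /Lop.
case: r => [|r]; case: s => [|s];
  by rewrite !(commDl, commDr, commZl, commZr, comm0l, comm0r).
Qed.

Lemma lem2 r s : @Lop A a b d r s = c r s.
Proof.
have -> : c r s = \sum_(i < n) \sum_(k < n)
    (Tt g r i i * Tt g s k k - Tt g s i i * Tt g r k k).
  by rewrite sum2B !sum2M.
under eq_bigr => i _ do under eq_bigr => k _ do rewrite -H.
under eq_bigr => i _ do under eq_bigr => k _ do
  rewrite !(commDl, commDr, commZl, commZr).
rewrite sum2_lin /Lop /d.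
case: r => [|r]; case: s => [|s] /=;
  by rewrite ?(sum2c0l, sum2c0r).
Qed.

End Main.

Transparent comm_r.
Theorem mainTheorem3 (n : nat) (a b : nat -> CC_fieldType) :
  (1 <= n)%N -> b 0%N = 0 -> (forall m, (1 <= m)%N -> b m != 0) ->
  forall (A : algType CC_fieldType) (g : nat -> 'I_n -> 'I_n -> A),
    OY_relations a b g ->
    forall r s : nat, omega_coef g r * omega_coef g s = omega_coef g s * omega_coef g r.
Proof.
move=> _ _ _ A g H r s.
apply/eqP; rewrite -subr_eq0; apply/eqP.
pose F r s := comm_r (omega_coef g r) (omega_coef g s).
have w0 : omega_coef g 0 = n%:R.
  by rewrite /omega_coef /Tt /=; under eq_bigr => i _ do rewrite eqxx; rewrite sumr_const card_ord.
apply: (@LL_zero A a b F) => [s'|r'|r' s'].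
- by rewrite /F w0 /comm_r mulr_natl mulr_natr subrr.
- by rewrite /F w0 /comm_r mulr_natl mulr_natr subrr.
- rewrite (@Lop_ext A a b (@Lop A a b F) _ (fun p q => @lem1 n a b A g H p q)).
  exact: (@lem2 n a b A g H).
Qed.
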